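(* Fix $\alpha\in(0,1]$ and $n\ge1$, and let $\mathcal F_n$, $\mathcal M^*$ and $\hat A$ be as in the context. Suppose that $\hat A$ is measurable and $f\in\mathcal F_n$. Then $f=f\,\mathbf 1_{\hat A}$ $m$-almost everywhere.
   Context: Let $(X,m)$ be a measure space, $A\subsetneq X$ measurable and $T:A\to X$ measurable such that: $H_0:=T(A)\setminus A$ is measurable; $m(A\cap T^{-1}H_0)>0$; $m(E)>0$ whenever $E\subseteq X$ is measurable with $m(T^{-1}E)>0$; and $T$ is locally finite-to-one (a nonsingular open dynamical system). Preimages are taken in $A$; $A_1=A\cap T^{-1}A$; $\mathbf 1_{A_1}\psi\circ T$ is $\psi\circ T$ on $A_1$ and $0$ elsewhere in $A$. Let $\psi_1,\dots,\psi_n\in L^\infty(A;m)$ with $\sum_j\psi_j=\mathbf 1_A$. Let $\mathcal F_n=\{0\le\varphi\in L^1(A;m):\int_{A_1}\varphi\,dm=\alpha,\ \int_A\varphi\,dm=1,\ \int_A[\mathbf 1_{A_1}\psi_j\circ T-\alpha\psi_j]\varphi\,dm=0,\ j=1,\dots,n\}$. Define $\mathcal M^*:\mathbb R^{n+1}\to L^\infty(A;m)$ by $\mathcal M^*\lambda=\lambda_0\mathbf 1_{A_1}+\sum_{j=1}^n\lambda_j(\mathbf 1_{A_1}\psi_j\circ T-\alpha\psi_j)$. The reduced domain $\hat A$ is obtained from $A$ by removing the support $\{\mathcal M^*\lambda\ne0\}$ of every function $\mathcal M^*\lambda$ with $\lambda\in\mathbb R^{n+1}$, $\lambda_0=0$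 and $\mathcal M^*\lambda\le0$ $m$-a.e. *)

(* Defs.v *)
From HB Require Import structures.
From mathcomp Require Import all_boot all_order all_algebra.
From mathcomp Require Import all_classical all_reals all_analysis.
Set Implicit Arguments. Unset Strict Implicit. Unset Printing Implicit Defensive.
Import Order.TTheory GRing.Theory Num.Theory.
Local Open Scope classical_set_scope.
Local Open Scope ring_scope.

Section OpenSystem.
Context {d : measure_display} {X : measurableType d} {R : realType}.

(* Preimages are taken inside A: T^{-1} E := A ∩ T @^-1` E. *)
Definition preA (A : set X) (T : X -> X) (E : set X) : set X := A `&` T @^-1` E.

Definition H0 (A : set X) (T : X -> X) : set X := (T @` A) `\` A.

Definition A1 (A : set X) (T : X -> X) : set X := preA A T A.

Definition locally_finite_to_one (A : set X) (T : X -> X) : Prop :=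
  forall y : X, finite_set (preA A T [set y]).

Definition open_system (m : {measure set X -> \bar R}) (A : set X) (T : X -> X) : Prop :=
  [/\ measurable A, A <> setT, measurable_fun A T,
      measurable (H0 A T)
    & [/\ (0 < m (preA A T (H0 A T)))%E,
        (forall E, measurable E -> (0 < m (preA A T E))%E -> (0 < m E)%E)
      & locally_finite_to_one A T]].

Definition Linfty_on (m : {measure set X -> \bar R}) (A : set X) (psi : X -> R) : Prop :=
  measurable_fun A psi /\ exists M : R, {ae m, forall x, A x -> `|psi x| <= M}.

Definition compT (A : set X) (T : X -> X) (psi : X -> R) (x : X) : R :=
  \1_(A1 A T) x * psi (T x).

Definition Fn (m : {measure set X -> \bar R}) (A : set X) (T : X -> X) (alpha : R)
    (n : nat) (psi : 'I_n -> X -> R) (phi : X -> R) : Prop :=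
  [/\ measurable_fun A phi,
      m.-integrable A (EFin \o phi),
      {ae m, forall x, A x -> 0 <= phi x}
    & [/\ (\int[m]_(x in A1 A T) (phi x)%:E = alpha%:E)%E,
      (\int[m]_(x in A) (phi x)%:E = 1%:E)%E
    & forall j : 'I_n,
        (\int[m]_(x in A) ((compT A T (psi j) x - alpha * psi j x) * phi x)%:E = 0)%E]].

(* M^* lambda, with lambda ∈ R^{n+1} indexed by 'I_n.+1 (lambda_0 = lam ord0,
   lambda_{j+1} = lam (lift ord0 j)). *)
Definition Mstar (A : set X) (T : X -> X) (alpha : R) (n : nat)
    (psi : 'I_n -> X -> R) (lam : 'I_n.+1 -> R) (x : X) : R :=
  lam ord0 * \1_(A1 A T) x
  + \sum_(j < n) lam (lift ord0 j) * (compT A T (psi j) x - alpha * psi j x).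

Definition admissible (m : {measure set X -> \bar R}) (A : set X) (T : X -> X)
    (alpha : R) (n : nat) (psi : 'I_n -> X -> R) (lam : 'I_n.+1 -> R) : Prop :=
  lam ord0 = 0 /\ {ae m, forall x, A x -> Mstar A T alpha psi lam x <= 0}.

Definition Msupp (A : set X) (T : X -> X) (alpha : R) (n : nat)
    (psi : 'I_n -> X -> R) (lam : 'I_n.+1 -> R) : set X :=
  [set x | A x /\ Mstar A T alpha psi lam x != 0].

Definition Ahat (m : {measure set X -> \bar R}) (A : set X) (T : X -> X)
    (alpha : R) (n : nat) (psi : 'I_n -> X -> R) : set X :=
  A `\` \bigcup_(lam in admissible m A T alpha psi) Msupp A T alpha psi lam.

End OpenSystem.

(* Main.v *)
Require Import Defs.
From HB Require Import structures.
From mathcomp Require Import all_boot all_order all_algebra.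
From mathcomp Require Import all_classical all_reals all_analysis measurable_realfun.
Import Order.TTheory GRing.Theory Num.Theory.
Local Open Scope classical_set_scope.
Local Open Scope ring_scope.
Lemma finite_gen (R : fieldType) (k : nat) (P : ('I_k -> R) -> Prop) :
  exists s : seq 'rV[R]_k, (forall v, v \in s -> P (fun i => v 0 i)) /\
    forall l, P l -> exists c : 'I_(size s) -> R,
      forall i, l i = \sum_(j < size s) c j * (s`_j) 0 i.
Proof.
pose Q (j : nat) := `[< exists s : seq 'rV[R]_k,
   (forall v, v \in s -> P (fun i => v 0 i)) /\ \dim (span s) = j >].
have Q0 : exists j, Q j.
  exists 0%N; apply/asboolP; exists [::]; split => //.
  by rewrite span_nil dimv0.
have Qb : forall j, Q j -> (j <= \dim (fullv : {vspace 'rV[R]_k}))%N.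
  move=> j /asboolP [s [_ <-]].
  by rewrite dimvS // subvf.
case: (ex_maxnP Q0 Qb) => j /asboolP [s [sP sd]] jmax.
exists s; split => // l Pl.
pose w : 'rV[R]_k := \row_i l i.
have ws : w \in span s.
  have Q' : Q (\dim (span (w :: s))).
    apply/asboolP; exists (w :: s); split => //.
    move=> v; rewrite inE => /orP [/eqP -> | /sP //].
    by rewrite (_ : (fun i => _) = l) //; apply: funext => i; rewrite mxE.
  have := jmax _ Q'; rewrite -sd => hle.
  have sub : (span s <= span (w :: s))%VS.
    by apply: sub_span => v vs; rewrite inE vs orbT.
  have /eqP -> : span s == span (w :: s) by rewrite eqEdim sub hle.
  by apply: memv_span; rewrite inE eqxx.
have := coord_span (X := in_tuple s) ws => ew.
exists (fun j0 => coord (in_tuple s) j0 w) => i.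
have -> : l i = w 0 i by rewrite mxE.
rewrite {1}ew summxE; apply: eq_bigr => j0 _.
by rewrite mxE.
Qed.
Lemma Mstar_lin (d : measure_display) (X : measurableType d) (R : realType)
  (A : set X) (T : X -> X) (alpha : R) (n : nat) (psi : 'I_n -> X -> R)
  (K : nat) (c : 'I_K -> R) (l : 'I_K -> 'I_n.+1 -> R) (x : X) :
  Mstar A T alpha psi (fun i => \sum_(k < K) c k * l k i) x =
  \sum_(k < K) c k * Mstar A T alpha psi (l k) x.
Proof.
rewrite /Mstar.
under [RHS]eq_bigr do rewrite mulrDr mulr_sumr.
rewrite big_split /= mulr_suml; congr (_ + _).
  by apply: eq_bigr => k _; rewrite mulrA.
rewrite exchange_big /=; apply: eq_bigr => j _.
rewrite mulr_suml; apply: eq_bigr => k _; by rewrite mulrA.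
Qed.
Lemma compT_meas (d : measure_display) (X : measurableType d) (R : realType)
  (A : set X) (T : X -> X) (psi : X -> R) :
  measurable A -> measurable_fun A T -> measurable_fun A psi ->
  measurable_fun A (compT A T psi).
Proof.
move=> mA mT mpsi.
have mA1 : measurable (A1 A T) by exact: mT.
have sA1 : A1 A T `<=` A by move=> x [].
have eA : A = A1 A T `|` (A `\` A1 A T) by rewrite setDUK.
rewrite [X in measurable_fun X _]eA; apply/measurable_funU => //.
  exact: measurableD.
split.
- apply: (@eq_measurable_fun _ _ _ _ _ (psi \o T)).
    by move=> x /set_mem xA1; rewrite /compT indicE mem_set // mul1r.
  apply: (measurable_comp mA) mpsi (measurable_funS mA sA1 mT).
  by move=> _ [x [_ xA] <-].
- apply: (@eq_measurable_fun _ _ _ _ _ (cst (0:R))); last exact: measurable_cst.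
  by move=> x /set_mem [_ nx]; rewrite /compT indicE memNset // mul0r.
Qed.
Section S1.
Local Open Scope ereal_scope.
Lemma int0_integrable (d : measure_display) (X : measurableType d) (R : realType)
  (m : {measure set X -> \bar R}) (D : set X) (h : X -> \bar R) :
  measurable D -> measurable_fun D h -> (\int[m]_(x in D) h x = 0)%E ->
  m.-integrable D h.
Proof.
move=> mD mh h0; apply/integrableP; split => //.
have : (\int[m]_(x in D) h x) \is a fin_num by rewrite h0.
rewrite integralE fin_numB => /andP [p n].
rewrite (_ : (fun x => `|h x|)%E = h^\+ \+ h^\-)%E; last first.
  by apply: funext => x; rewrite -[LHS]/((abse \o h) x) fune_abse.
rewrite ge0_integralD //; last 2 first.
- exact: measurable_funepos.
- exact: measurable_funeneg.
by rewrite ltey_eq fin_numD p n.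
Qed.
End S1.

Section Key.
Local Open Scope ereal_scope.
Lemma key (d : measure_display) (X : measurableType d) (R : realType)
    (m : {measure set X -> \bar R}) (A : set X) (T : X -> X)
    (alpha : R) (n : nat) (psi : 'I_n -> X -> R) (f : X -> R)
    (lam : 'I_n.+1 -> R) :
  open_system m A T ->
  (forall j, Linfty_on m A (psi j)) ->
  Fn m A T alpha psi f ->
  admissible m A T alpha psi lam ->
  {ae m, forall x, A x -> (Mstar A T alpha psi lam x != 0)%R -> f x = 0%R}.
Proof.
case=> mA _ mT _ _ Hpsi [mf intf f0 [_ _ Hint]] [l0 Hle].
pose g j x := ((compT A T (psi j) x - alpha * psi j x) * f x)%R.
have mg j : measurable_fun A (g j).
  apply: measurable_funM => //; apply: measurable_funB.
    by apply: compT_meas => //; case: (Hpsi j).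
  by apply: measurable_funM => //; case: (Hpsi j).
have ig j : m.-integrable A (EFin \o g j).
  apply: (@int0_integrable _ _ _ m A _ mA); [exact/measurable_EFinP | exact: Hint].
pose h x := (Mstar A T alpha psi lam x * f x)%R.
have hE x : h x = (\sum_j lam (lift ord0 j) * g j x)%R.
  rewrite /h /Mstar l0 mul0r add0r mulr_suml; apply: eq_bigr => j _.
  by rewrite /g mulrA.
have ih : m.-integrable A (EFin \o h).
  apply: (eq_integrable mA (fun x => \sum_(j < n) (lam (lift ord0 j))%:E * (g j x)%:E)).
    by move=> x _; rewrite /= hE -sumEFin.
  by apply: (integrable_sum mA) => j _; apply: (integrableZl mA); exact: ig.
have h0 : \int[m]_(x in A) (h x)%:E = 0.
  rewrite (eq_integral (fun x => \sum_(j < n) (lam (lift ord0 j))%:E * (g j x)%:E)); last first.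
    by move=> x _; rewrite hE -sumEFin.
  rewrite integral_sum //; last by move=> j; apply: (integrableZl mA); exact: ig.
  rewrite big1 // => j _; rewrite (integralZl mA (ig j)).
  by rewrite [X in _ * X]Hint mule0.
have hle : {ae m, forall x, A x -> (h x <= 0)%R}.
  apply: filterS2 Hle f0 => x H1 H2 Ax.
  exact: mulr_le0_ge0 (H1 Ax) (H2 Ax).
have mh : measurable_fun A (EFin \o h) by exact: measurable_int ih.
have habs : \int[m]_(x in A) `|(EFin \o h) x| = 0.
  transitivity (\int[m]_(x in A) ((-1)%:E * (h x)%:E)); last first.
    by rewrite (integralZl mA ih) h0 mule0.
  apply: ae_eq_integral => //.
  - exact: measurableT_comp.
  - exact: measurable_funeM.
  - apply: filterS hle => x H Ax /=.
    by rewrite ler0_norm ?(H Ax) // -EFinM mulN1r.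
have := (ae_eq_integral_abs m mA mh).1 habs.
apply: filterS => x H Ax Mne.
have /eqP := H Ax; rewrite /= eqe mulf_eq0 => /orP [/eqP M0|/eqP //].
by move: Mne; rewrite M0 eqxx.
Qed.
End Key.

Theorem lemma5 (d : measure_display) (X : measurableType d) (R : realType)
    (m : {measure set X -> \bar R}) (A : set X) (T : X -> X)
    (alpha : R) (n : nat) (psi : 'I_n -> X -> R) (f : X -> R) :
  open_system m A T ->
  0 < alpha <= 1 ->
  (1 <= n)%N ->
  (forall j, Linfty_on m A (psi j)) ->
  {ae m, forall x, A x -> \sum_(j < n) psi j x = 1} ->
  measurable (Ahat m A T alpha psi) ->
  Fn m A T alpha psi f ->
  {ae m, forall x, A x -> f x = f x * \1_(Ahat m A T alpha psi) x}.
Proof.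
move=> Hsys _ _ Hpsi _ _ Hf.
have [s [sP sgen]] := @finite_gen R n.+1 (fun l => admissible m A T alpha psi l).
have Hall : {ae m, forall x, forall v, v \in s -> A x ->
    Mstar A T alpha psi (fun i => v 0 i) x != 0 -> f x = 0}.
  clear sgen; elim: s sP => [_|v s IH sP].
    by apply: nearW => x v; rewrite in_nil.
  have H1 := @key d X R m A T alpha n psi f _ Hsys Hpsi Hf (sP v (mem_head _ _)).
  have H2 := IH (fun w ws => sP w (mem_behead (s := v :: s) ws)).
  apply: filterS2 H1 H2 => x H1 H2 w; rewrite inE => /orP [/eqP -> | ws].
    exact: H1.
  exact: H2.
apply: filterS Hall => x H Ax.
case: (boolP (x \in Ahat m A T alpha psi)) => xin.
  by rewrite indicE xin mulr1.
rewrite indicE (negbTE xin) mulr0.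
have nA : ~ Ahat m A T alpha psi x by move=> hx; move: xin; rewrite mem_set.
have [lam Hl [_ Mne]] : exists2 lam, admissible m A T alpha psi lam &
    Msupp A T alpha psi lam x.
  case: (pselect (exists2 lam, admissible m A T alpha psi lam &
    Msupp A T alpha psi lam x)) => // nex; exfalso.
  apply: nA; split => // -[lam Hl Hs].
case: (eqVneq (f x) 0) => // fne; exfalso.
have all0 : forall v, v \in s -> Mstar A T alpha psi (fun i => v 0 i) x = 0.
  move=> v vs; case: (eqVneq (Mstar A T alpha psi (fun i => v 0 i) x) 0) => //.
  by move=> /(H v vs Ax) fx0; move: fne; rewrite fx0 eqxx.
have [c hc] := sgen lam Hl.
have el : lam = (fun i => \sum_(k < size s) c k * (s`_k) 0 i) by apply: funext.
move: Mne; rewrite el.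
rewrite (@Mstar_lin _ _ _ A T alpha n psi _ c (fun k i => (s`_k) 0 i) x).
rewrite big1 ?eqxx // => k _.
by rewrite all0 ?mulr0 // mem_nth.
Qed.
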